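(* Let $T$ be a $J$-unitary operator on ${\cal K}$. Then the geometric multiplicity of $1$ as an eigenvalue of $T$ equals the multiplicity of $1$ as an eigenvalue of $V(T)$, and the eigenvectors coincide: $\mathrm{Ker}(T-{\bf 1})=\mathrm{Ker}(V(T)-{\bf 1})$.
   Context: ${\cal H}$ is a separable complex Hilbert space, ${\cal K}={\cal H}\oplus{\cal H}$, $J=\begin{pmatrix}{\bf 1}&0\\0&-{\bf 1}\end{pmatrix}$. A bounded invertible $T$ on ${\cal K}$ is $J$-unitary if $T^*JT=J$; writing $T=\begin{pmatrix}a&b\\c&d\end{pmatrix}$ the blocks $a,d$ are invertible. $V(T)$ denotes the unitary $V(T)=\begin{pmatrix}(a^* )^{-1}&bd^{-1}\\-d^{-1}c&d^{-1}\end{pmatrix}=\begin{pmatrix}a-bd^{-1}c&bd^{-1}\\-d^{-1}c&d^{-1}\end{pmatrix}$. *)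

(* Defs.v *)
From mathcomp Require Import all_boot all_order all_algebra complex.
From mathcomp Require Import boolp classical_sets reals.
Set Implicit Arguments. Unset Strict Implicit. Unset Printing Implicit Defensive.
Import Order.TTheory GRing.Theory Num.Theory.
Local Open Scope ring_scope.
Local Open Scope classical_set_scope.

Section Hilbert.
Variables (R : realType) (W : lmodType R[i]) (ip : W -> W -> R[i]).

Definition hnorm (x : W) : R := Num.sqrt (complex.Re (ip x x)).

Definition is_inner_product : Prop :=
  [/\ (forall (k : R[i]) (x y z : W), ip (k *: x + y) z = k * ip x z + ip y z),
      (forall x y : W, ip y x = (ip x y)^*),
      (forall x : W, 0 <= ip x x)
    & (forall x : W, ip x x = 0 -> x = 0)].

Definition hcomplete : Prop :=
  forall u : nat -> W,
    (forall e : R, 0 < e -> exists N : nat, forall m n : nat,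
        (N <= m)%N -> (N <= n)%N -> hnorm (u m - u n) < e) ->
    exists l : W, forall e : R, 0 < e -> exists N : nat, forall n : nat,
        (N <= n)%N -> hnorm (u n - l) < e.

Definition hseparable : Prop :=
  exists s : nat -> W, forall (x : W) (e : R), 0 < e -> exists n : nat, hnorm (x - s n) < e.

Definition is_sep_hilbert : Prop := [/\ is_inner_product, hcomplete & hseparable].

Definition is_linear_op (f : W -> W) : Prop :=
  forall (k : R[i]) (x y : W), f (k *: x + y) = k *: f x + f y.

Definition is_bounded_op (f : W -> W) : Prop :=
  is_linear_op f /\ exists M : R, forall x : W, hnorm (f x) <= M * hnorm x.

Definition is_bounded_invertible (f : W -> W) : Prop :=
  is_bounded_op f /\ exists g : W -> W, [/\ is_bounded_op g, cancel f g & cancel g f].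

Definition is_adjoint (f S : W -> W) : Prop :=
  forall x y : W, ip (f x) y = ip x (S y).

Definition ker1 (f : W -> W) : set W := [set x | f x - x = 0].
End Hilbert.

Section Krein.
Variables (R : realType) (H : lmodType R[i]) (ip : H -> H -> R[i]).

(* K = H (+) H with the direct-sum inner product *)
Definition ipK (p q : (H * H)%type) : R[i] := ip p.1 q.1 + ip p.2 q.2.

Definition Jop (p : (H * H)%type) : (H * H)%type := (p.1, - p.2).

Definition is_J_unitary (T : (H * H)%type -> (H * H)%type) : Prop :=
  is_bounded_invertible ipK T /\
  exists S, is_adjoint ipK T S /\ forall p, S (Jop (T p)) = Jop p.

(* blocks of T = [[a, b], [c, d]] *)
Definition blk_a (T : (H * H)%type -> (H * H)%type) (x : H) : H := (T (x, 0)).1.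
Definition blk_b (T : (H * H)%type -> (H * H)%type) (y : H) : H := (T (0, y)).1.
Definition blk_c (T : (H * H)%type -> (H * H)%type) (x : H) : H := (T (x, 0)).2.
Definition blk_d (T : (H * H)%type -> (H * H)%type) (y : H) : H := (T (0, y)).2.

(* inverse of an operator (meaningful when it is bijective, which is the case
   for the block d of a J-unitary T) *)
Definition op_inv (f : H -> H) (y : H) : H := xget 0 [set x | f x = y].

(* V(T) = [[a - b d^-1 c, b d^-1], [- d^-1 c, d^-1]] *)
Definition VT (T : (H * H)%type -> (H * H)%type) (p : (H * H)%type) : (H * H)%type :=
  let dinv := op_inv (blk_d T) in
  (blk_a T p.1 - blk_b T (dinv (blk_c T p.1)) + blk_b T (dinv p.2),
   - dinv (blk_c T p.1) + dinv p.2).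
End Krein.

(* Main.v *)
Require Import Defs.
From mathcomp Require Import all_boot all_order all_algebra complex.
From mathcomp Require Import boolp classical_sets reals.
From mathcomp Require Import ring lra.
Import Order.TTheory GRing.Theory Num.Theory.
Local Open Scope ring_scope.
Local Open Scope classical_set_scope.

Set Implicit Arguments.
Section Inner.
Variables (R : realType) (H : lmodType R[i]) (ip : H -> H -> R[i]).
Hypothesis hip : is_inner_product ip.
Let hip4 := hip : [/\ (forall (k : R[i]) (x y z : H), ip (k *: x + y) z = k * ip x z + ip y z), (forall x y : H, ip y x = (ip x y)^*), (forall x : H, 0 <= ip x x) & (forall x : H, ip x x = 0 -> x = 0)].

Local Notation Nr x := (complex.Re (ip x x)).
Local Notation RP x y := (complex.Re (ip x y)).
Local Notation hn := (hnorm ip).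

Lemma ipDl x y z : ip (x + y) z = ip x z + ip y z.
Proof. by case: hip4 => h _ _ _; have := h 1 x y z; rewrite scale1r mul1r. Qed.

Lemma ip0l z : ip 0 z = 0.
Proof.
have h := ipDl 0 0 z; rewrite addr0 in h.
by apply: (addrI (ip 0 z)); rewrite addr0 -h.
Qed.

Lemma ipZl k x z : ip (k *: x) z = k * ip x z.
Proof. by case: hip4 => h _ _ _; rewrite -[k *: x]addr0 h ip0l addr0. Qed.

Lemma ipNl x z : ip (- x) z = - ip x z.
Proof. by rewrite -scaleN1r ipZl mulN1r. Qed.

Lemma ipBl x y z : ip (x - y) z = ip x z - ip y z.
Proof. by rewrite ipDl ipNl. Qed.

Lemma ipC x y : ip y x = (ip x y)^*.
Proof. by case: hip4. Qed.

Lemma ipJ x y : (ip x y)^* = ip y x.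
Proof. by rewrite [ip y x]ipC. Qed.

Lemma ipDr x y z : ip x (y + z) = ip x y + ip x z.
Proof. rewrite [LHS]ipC ipDl rmorphD; congr (_ + _); exact: ipJ. Qed.

Lemma ip0r z : ip z 0 = 0.
Proof. by rewrite [LHS]ipC ip0l rmorph0. Qed.

Lemma ipNr x z : ip x (- z) = - ip x z.
Proof. rewrite [LHS]ipC ipNl rmorphN; congr (- _); exact: ipJ. Qed.

Lemma ipBr x y z : ip x (y - z) = ip x y - ip x z.
Proof. by rewrite ipDr ipNr. Qed.

Lemma ReJ (w : R[i]) : complex.Re (w^*) = complex.Re w.
Proof. by case: w. Qed.

Lemma ReD (w v : R[i]) : complex.Re (w + v) = complex.Re w + complex.Re v.
Proof. by case: w; case: v. Qed.

Lemma ReN (w : R[i]) : complex.Re (- w) = - complex.Re w.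
Proof. by case: w. Qed.

Lemma ReRM (t : R) (w : R[i]) : complex.Re ((t%:C)%C * w) = t * complex.Re w.
Proof. by case: w => a b /=; simpc. Qed.

Lemma RPC x y : RP y x = RP x y.
Proof. by rewrite ipC ReJ. Qed.

Lemma RPZl t x y : RP ((t%:C)%C *: x) y = t * RP x y.
Proof. by rewrite ipZl ReRM. Qed.

Lemma RPZr t x y : RP x ((t%:C)%C *: y) = t * RP x y.
Proof. by rewrite RPC RPZl RPC. Qed.

Lemma RPDl x y z : RP (x + y) z = RP x z + RP y z.
Proof. by rewrite ipDl ReD. Qed.
Lemma RPDr x y z : RP x (y + z) = RP x y + RP x z.
Proof. by rewrite ipDr ReD. Qed.
Lemma RPNl x y : RP (- x) y = - RP x y.
Proof. by rewrite ipNl ReN. Qed.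
Lemma RPNr x y : RP x (- y) = - RP x y.
Proof. by rewrite ipNr ReN. Qed.

Lemma Nge0 x : 0 <= Nr x.
Proof. by case: hip4 => _ _ h _; move: (h x); rewrite lecE => /andP[_]. Qed.

Lemma Im_ip x : complex.Im (ip x x) = 0.
Proof. by case: hip4 => _ _ h _; move: (h x); rewrite lecE => /andP[/eqP ->]. Qed.

Lemma Neq0 x : Nr x = 0 -> x = 0.
Proof.
move=> h0; case: hip4 => _ _ _ h; apply: h.
have := Im_ip x; move: h0; case: (ip x x) => a b /= -> ->; done.
Qed.

Lemma Nexp x y t : Nr (x + (t%:C)%C *: y) = Nr x + 2 * t * RP x y + t ^+ 2 * Nr y.
Proof.
rewrite !RPDl !RPDr !RPZl !RPZr (RPC y x); rewrite expr2 mulr2n; ring.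
Qed.

Lemma RP0r x : RP x 0 = 0.
Proof. by rewrite ip0r. Qed.

Lemma CS x y : RP x y ^+ 2 <= Nr x * Nr y.
Proof.
have [y0|ny0] := eqVneq (Nr y) 0.
  by rewrite (@Neq0 y y0) RP0r expr0n /= ip0r mulr0.
have ny : 0 < Nr y by rewrite lt0r ny0 Nge0.
set r := RP x y.
have h := Nge0 (x + ((- r / Nr y)%:C)%C *: y).
rewrite Nexp -/r in h.
have e : Nr y * (Nr x + 2 * (- r / Nr y) * r + (- r / Nr y) ^+ 2 * Nr y) = Nr x * Nr y - r ^+ 2.
  by field; rewrite ny0.
have : 0 <= Nr x * Nr y - r ^+ 2 by rewrite -e mulr_ge0 // ltW.
by rewrite subr_ge0.
Qed.

Lemma hn_ge0 x : 0 <= hn x.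
Proof. exact: sqrtr_ge0. Qed.

Lemma hn_sqr x : hn x ^+ 2 = Nr x.
Proof. by rewrite sqr_sqrtr // Nge0. Qed.

Lemma RPle x y : RP x y <= hn x * hn y.
Proof.
apply: (le_trans (ler_norm _)).
rewrite -(ler_pXn2r (n:=2)) //; last by rewrite nnegrE mulr_ge0 // hn_ge0.
  by rewrite real_normK ?num_real // exprMn !hn_sqr CS.
by rewrite nnegrE.
Qed.

Lemma NN x : Nr (- x) = Nr x.
Proof. by rewrite RPNl RPNr opprK. Qed.

Lemma hnN x : hn (- x) = hn x.
Proof. by rewrite /hnorm NN. Qed.

Lemma hn_tri x y : hn (x + y) <= hn x + hn y.
Proof.
rewrite -(ler_pXn2r (n:=2)) // ?nnegrE ?addr_ge0 ?hn_ge0 //.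
rewrite hn_sqr -[y]scale1r -[1]/((1:R)%:C)%C Nexp scale1r.
rewrite sqrrD !hn_sqr expr1n mul1r; have := RPle x y; lra.
Qed.

Lemma hn0 : hn 0 = 0.
Proof. by rewrite /hnorm ip0r sqrtr0. Qed.

Lemma hn_eq0 x : hn x = 0 -> x = 0.
Proof. by move=> h; apply: Neq0; rewrite -hn_sqr h expr0n. Qed.

Lemma hnB x y : hn (x - y) = hn (y - x).
Proof. by rewrite -hnN opprB. Qed.

Lemma geo_small (q : R) : 0 <= q -> q < 1 -> forall e : R, 0 < e -> exists n : nat, q ^+ n < e.
Proof.
move=> q0 q1 e e0.
have [->|qn0] := eqVneq q 0; first by exists 1%N; rewrite expr1.
have qp : 0 < q by rewrite lt0r qn0.
set x := q^-1.
have x1 : 1 < x by rewrite /x invf_gt1.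
have bern : forall n : nat, 1 + n%:R * (x - 1) <= x ^+ n.
  elim=> [|n IH]; first by rewrite mul0r addr0 expr0.
  rewrite exprS -natr1.
  have hx : 0 <= x ^+ n by rewrite exprn_ge0 // ltW // (lt_trans _ x1).
  have n0 : 0 <= n%:R :> R by rewrite ler0n.
  have h1 : 0 <= x * (x ^+ n - (1 + n%:R * (x - 1))).
    by rewrite mulr_ge0 ?subr_ge0 // ltW // (lt_trans _ x1).
  have h2 : 0 <= n%:R * (x - 1) * (x - 1) by rewrite !mulr_ge0 // subr_ge0 ltW.
  lra.
set t := (e * (x - 1))^-1.
have t0 : 0 <= t by rewrite /t invr_ge0 mulr_ge0 // ?ltW // subr_gt0.
have ht := archi_boundP t0.
exists (Num.Def.archi_bound t).
set n := Num.Def.archi_bound t in ht *.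
have qx : q ^+ n * x ^+ n = 1 by rewrite -exprMn /x mulfV // expr1n.
have et : e * t * (x - 1) = 1 by rewrite /t mulrAC mulfV // mulf_neq0 ?subr_eq0 ?gt_eqF.
have b := bern n.
have qn : 0 <= q ^+ n by rewrite exprn_ge0 // ltW.
have ex1 : 0 < e * (x - 1) by rewrite mulr_gt0 // subr_gt0.
have h1 : 0 < e * (x - 1) * (n%:R - t) by rewrite mulr_gt0 // subr_gt0.
have h2 : 0 <= e * (x ^+ n - (1 + n%:R * (x - 1))) by rewrite mulr_ge0 ?subr_ge0 // ltW.
have h3 : 1 < e * x ^+ n by nra.
rewrite ltNge; apply/negP => h4.
have : 0 <= (q ^+ n - e) * x ^+ n by rewrite mulr_ge0 ?subr_ge0 // exprn_ge0 // ltW // (lt_trans _ x1).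
nra.
Qed.

Lemma banach (F : H -> H) (q : R) : hcomplete ip -> 0 <= q -> q < 1 ->
  (forall x y, hn (F x - F y) <= q * hn (x - y)) -> exists l, F l = l.
Proof.
move=> hc q0 q1 hF.
pose u n := iter n F 0.
set C := hn (u 1%N - u 0%N).
have C0 : 0 <= C by apply: hn_ge0.
have step : forall n, hn (u n.+1 - u n) <= q ^+ n * C.
  elim=> [|n IH]; first by rewrite expr0 mul1r.
  rewrite /u !iterS; apply: (le_trans (hF _ _)).
  by rewrite exprS -mulrA ler_wpM2l.
have tri3 : forall a b c : H, hn (a - c) <= hn (a - b) + hn (b - c).
  by move=> a b c; have := hn_tri (a - b) (b - c); rewrite addrA subrK.
have cauchy : forall n j, hn (u (n + j)%N - u n) * (1 - q) <= C * (q ^+ n - q ^+ (n + j)).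
  move=> n; elim=> [|j IH]; first by rewrite addn0 subrr hn0 mul0r subrr mulr0.
  rewrite addnS.
  have h1 := tri3 (u (n + j).+1) (u (n + j)%N) (u n).
  have h2 := step (n + j)%N.
  rewrite exprS.
  have : 0 <= 1 - q by rewrite subr_ge0 ltW.
  have : 0 <= q ^+ (n + j) by rewrite exprn_ge0.
  nra.
have bnd : forall m n, (n <= m)%N -> hn (u m - u n) * (1 - q) <= C * q ^+ n.
  move=> m n /subnKC <-; apply: (le_trans (cauchy _ _)).
  rewrite ler_wpM2l // lerBlDr lerDl exprn_ge0 //.
have q1' : 0 < 1 - q by rewrite subr_gt0.
have [l hl] : exists l, forall e, 0 < e -> exists N, forall n, (N <= n)%N -> hn (u n - l) < e.
  apply: hc => e e0.
  have [N hN] := @geo_small q q0 q1 (e * (1 - q) / (C + 1)) (divr_gt0 (mulr_gt0 e0 q1') (ltr_wpDl C0 ltr01)).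
  exists N => m n hm hn'.
  have hq : forall k, (N <= k)%N -> C * q ^+ k < e * (1 - q).
    move=> k hk; have qk : q ^+ k <= q ^+ N by apply: ler_wiXn2l => //; apply: ltW.
    have hN' : q ^+ N * (C + 1) < e * (1 - q).
      by rewrite -ltr_pdivlMr // ltr_wpDl.
    have : 0 <= q ^+ k by rewrite exprn_ge0.
    nra.
  have [le_nm|lt_mn] := leqP n m.
    have := bnd m n le_nm; have := hq n hn'.
    have := hn_ge0 (u m - u n); nra.
  have := bnd n m (ltnW lt_mn); have := hq m hm; rewrite hnB.
  have := hn_ge0 (u n - u m); nra.
exists l.
have hz : forall e, 0 < e -> hn (F l - l) < e.
  move=> e e0; have [N hN] := hl (e / 2) (divr_gt0 e0 (ltr0Sn _ 1)).
  have a1 := hN N (leqnn N); have a2 := hN N.+1 (leqnSn N).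
  have : F l - l = (F l - F (u N)) + (u N.+1 - l) by rewrite /u iterS addrA subrK.
  move=> ->; apply: (le_lt_trans (hn_tri _ _)).
  have h3 := hF l (u N); rewrite [hn (l - u N)]hnB in h3.
  have h4 : 0 <= (1 - q) * hn (u N - l) by rewrite mulr_ge0 ?hn_ge0 // ltW.
  lra.
have : hn (F l - l) = 0.
  apply/eqP; rewrite eq_le hn_ge0 andbT; apply/negP => /negP; rewrite -ltNge => h.
  by have := hz _ h; rewrite ltxx.
by move/hn_eq0/eqP; rewrite subr_eq0 => /eqP.
Qed.
End Inner.

Lemma foo (K : pzRingType) (V : lmodType K) (x y z a b : V) (t : K) :
  x + t *: (z - a) - (y + t *: (z - b)) = (x - y) + (- t) *: (a - b).
Proof.
rewrite opprD addrACA; congr (_ + _).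
by rewrite scaleNr !scalerBr opprB addrC subrKA opprB.
Qed.

Section Op.
Variables (R : realType) (H : lmodType R[i]) (ip : H -> H -> R[i]).
Hypothesis hip : is_inner_product ip.
Hypothesis hc : hcomplete ip.
Variable T : (H * H)%type -> (H * H)%type.
Hypothesis Tlin : forall k p q, T (k *: p + q) = k *: T p + T q.
Variable M : R.
Hypothesis Tbd : forall p, hnorm (ipK ip) (T p) <= M * hnorm (ipK ip) p.
Variable g : (H * H)%type -> (H * H)%type.
Hypotheses (Tg : cancel T g) (gT : cancel g T).
Variable S : (H * H)%type -> (H * H)%type.
Hypothesis Sadj : forall p q, ipK ip (T p) q = ipK ip p (S q).
Hypothesis SJT : forall p, S (Jop (T p)) = Jop p.

Local Notation Nr x := (complex.Re (ip x x)).
Local Notation RP x y := (complex.Re (ip x y)).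
Local Notation hn := (hnorm ip).
Local Notation d := (blk_d T).
Local Notation b := (blk_b T).
Let ds w := (S (0, w)).2.

Lemma TB p q : T (p - q) = T p - T q.
Proof. by rewrite addrC -scaleN1r Tlin scaleN1r addrC. Qed.

Lemma Tpair x y : T (x, y) = (blk_a T x + b y, blk_c T x + d y).
Proof.
have -> : ((x, y) : (H * H)%type) = 1 *: (x, 0) + (0, y).
  by rewrite [RHS]surjective_pairing /= !scale1r addr0 add0r.
by rewrite Tlin scale1r [LHS]surjective_pairing.
Qed.

Lemma dB y1 y2 : d (y1 - y2) = d y1 - d y2.
Proof.
rewrite /blk_d; have -> : (T (0, y1)).2 - (T (0, y2)).2 = (T (0, y1) - T (0, y2)).2 by [].
rewrite -TB; congr (T _).2.
by rewrite [RHS]surjective_pairing /= subrr.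
Qed.

Lemma bB y1 y2 : b (y1 - y2) = b y1 - b y2.
Proof.
rewrite /blk_b; have -> : (T (0, y1)).1 - (T (0, y2)).1 = (T (0, y1) - T (0, y2)).1 by [].
rewrite -TB; congr (T _).1.
by rewrite [RHS]surjective_pairing /= subrr.
Qed.

Lemma Krein p : ipK ip (T p) (Jop (T p)) = ipK ip p (Jop p).
Proof. by rewrite Sadj SJT. Qed.

Lemma TJS r : T (Jop (S r)) = Jop r.
Proof.
have JJ : forall p : (H * H)%type, Jop (Jop p) = p.
  by move=> [p1 p2]; rewrite /Jop /= opprK.
have e : S r = Jop (g (Jop r)) by rewrite -SJT gT JJ.
by rewrite e JJ gT.
Qed.

Lemma d_below y : Nr y <= Nr (d y).
Proof.
have := Krein (0, y); rewrite /ipK /Jop /= => /(congr1 (@complex.Re R)).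
rewrite !ReD !(RPNr hip) (RP0r hip) -/(blk_b T y) -/(blk_d T y).
have := Nge0 hip (b y); lra.
Qed.

Lemma ds_below w : Nr w <= Nr (ds w).
Proof.
have := Krein (Jop (S (0, w))); rewrite TJS /ipK /Jop /= => /(congr1 (@complex.Re R)).
rewrite !ReD !(RPNr hip) !(RPNl hip) (RP0r hip) opprK -/(ds w).
have := Nge0 hip (S (0, w)).1; lra.
Qed.

Lemma d_inj : injective d.
Proof.
move=> y1 y2 e; apply/eqP; rewrite -subr_eq0; apply/eqP; apply: (Neq0 hip).
apply/eqP; rewrite eq_le Nge0 // andbT.
by have := d_below (y1 - y2); rewrite dB e subrr ip0r.
Qed.

Lemma adj y w : ip (d y) w = ip y (ds w).
Proof.
have := Sadj (0, y) (0, w); rewrite /ipK /= (ip0r hip) (ip0l hip) !add0r.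
by rewrite -/(blk_d T y).
Qed.

Lemma dsB w1 w2 : ds (w1 - w2) = ds w1 - ds w2.
Proof.
set D := ds (w1 - w2) - (ds w1 - ds w2).
have h : forall y, ip y D = 0.
  move=> y; rewrite /D !(ipBr hip) -!adj (ipBr hip); ring.
apply/eqP; rewrite -subr_eq0 -/D; apply/eqP.
by case: hip => _ _ _; apply; apply: h.
Qed.

Let M1 := Num.max M 1.
Lemma M1ge1 : 1 <= M1.
Proof. by rewrite le_max lexx orbT. Qed.

Lemma d_bd y : hn (d y) <= M1 * hn y.
Proof.
have := Tbd (0, y).
rewrite /hnorm /ipK /= (ip0l hip) add0r -/(blk_b T y) -/(blk_d T y) ReD => h.
apply: le_trans (_ : M * Num.sqrt (Nr y) <= _).
  apply: le_trans h; apply: ler_wsqrtr; rewrite lerDr; exact: Nge0.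
by rewrite ler_wpM2r ?sqrtr_ge0 // le_max lexx.
Qed.

Lemma ds_bd w : hn (ds w) <= M1 * hn w.
Proof.
have h1 : Nr (ds w) <= M1 * hn (ds w) * hn w.
  have := RPle hip (d (ds w)) w; rewrite adj => h.
  apply: le_trans h _; rewrite ler_wpM2r ?hn_ge0 //; exact: d_bd.
rewrite -(hn_sqr hip) in h1.
have W0 := @hn_ge0 R H ip w; have M0 : 0 <= M1 by apply: le_trans M1ge1.
rewrite leNgt; apply/negP => hlt.
have hp : 0 < hn (ds w) by apply: le_lt_trans hlt; rewrite mulr_ge0.
have : 0 < hn (ds w) * (hn (ds w) - M1 * hn w) by rewrite mulr_gt0 // subr_gt0.
rewrite expr2 in h1; nra.
Qed.

Lemma d_surj z : exists y, d y = z.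
Proof.
set K := M1 ^+ 4.
have K1 : 1 <= K by rewrite /K exprn_ege1 // M1ge1.
have K0 : 0 < K by apply: lt_le_trans K1.
set t := K^-1.
have t0 : 0 < t by rewrite /t invr_gt0.
have tK : t * K = 1 by rewrite /t mulVf // gt_eqF.
pose P w := d (ds w).
have PB : forall x y, P x - P y = P (x - y) by move=> x y; rewrite /P dsB dB.
have Pbd : forall e, Nr (P e) <= K * Nr e.
  move=> e; rewrite -!(hn_sqr hip).
  have h1 := d_bd (ds e); have h2 := ds_bd e.
  have h3 : hn (P e) <= M1 ^+ 2 * hn e.
    apply: le_trans h1 _; rewrite expr2 -mulrA ler_wpM2l //.
    by apply: le_trans _ M1ge1.
  rewrite /K (_ : 4 = 2 * 2)%N // exprM -exprMn.
  rewrite ler_pXn2r ?nnegrE ?hn_ge0 ?mulr_ge0 ?exprn_ge0 ?hn_ge0 //.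
  1,2: by apply: le_trans _ M1ge1.
have Ppos : forall e, Nr e <= RP e (P e).
  by move=> e; rewrite (RPC hip) /P adj; exact: ds_below.
pose F w := w + ((t%:C)%C) *: (z - P w).
set q := Num.sqrt (1 - t).
have t1 : t <= 1 by rewrite /t invf_le1.
have q0 : 0 <= q by exact: sqrtr_ge0.
have q2 : q ^+ 2 = 1 - t by rewrite /q sqr_sqrtr // subr_ge0.
have q1 : q < 1 by nra.
have hF : forall x y, hn (F x - F y) <= q * hn (x - y).
  move=> x y; rewrite /F foo PB.
  rewrite -rmorphN /hnorm /q -sqrtrM ?subr_ge0 //; apply: ler_wsqrtr.
  rewrite (Nexp hip).
  set N0 := RP (x - y) (x - y); set N1 := RP (x - y) (P (x - y)); set N2 := RP (P (x - y)) (P (x - y)).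
  have a1 : 0 <= t * t * (K * N0 - N2).
    by apply: mulr_ge0; [rewrite mulr_ge0 // ltW | rewrite subr_ge0 Pbd].
  have a2 : 0 <= t * (N1 - N0).
    by apply: mulr_ge0; [rewrite ltW | rewrite subr_ge0 Ppos].
  have a3 : t * t * K * N0 = t * N0 by rewrite -(mulrA t t) tK mulr1.
  rewrite sqrrN expr2. lra.
have [l hl] := banach hip F q hc q0 q1 hF.
exists (ds l).
move: hl; rewrite /F => /(congr1 (fun v => v - l)); rewrite addrC addKr subrr.
move/eqP; rewrite scaler_eq0 => /orP[|]; first by rewrite (_ : 0 = (0%:C)%C) // => /eqP [] /eqP; rewrite gt_eqF.
by rewrite subr_eq0 => /eqP ->.
Qed.

Lemma ker_eq : ker1 T = ker1 (VT T).
Proof.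
have dK : forall z, d (op_inv d z) = z.
  move=> z; rewrite /op_inv; have [y hy] := d_surj z.
  by have := @xgetPex _ 0 [set w | d w = z] (ex_intro _ y hy).
apply: funext => -[x y]; apply: propext; rewrite /ker1 /VT /=.
set u := op_inv d (blk_c T x); set v := op_inv d y.
have du : d u = blk_c T x by apply: dK.
have dv : d v = y by apply: dK.
have E : forall p : (H * H)%type, (p - (x, y) = 0) <-> (p.1 = x /\ p.2 = y).
  move=> [p1 p2]; split.
    by move/eqP; rewrite subr_eq0 => /eqP [-> ->].
  by move=> /= [-> ->]; rewrite subrr.
rewrite !E Tpair /=; split.
  move=> [e1 e2].
  have vu : v - u = y.
    by apply: d_inj; rewrite dB du dv -{1}e2 [blk_c T x + _]addrC addrK.
  split; last by rewrite addrC.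
  by rewrite -addrA [- b u + _]addrC -bB vu e1.
move=> [f1 f2].
have vu : v - u = y by rewrite addrC.
split.
  by rewrite -vu bB [b v - b u]addrC addrA.
by rewrite -{1}vu dB -du addrC subrK dv.
Qed.
End Op.

Unset Implicit Arguments.

Theorem theorem3p19 (R : realType) (H : lmodType R[i]) (ip : H -> H -> R[i])
    (HH : is_sep_hilbert ip) (T : (H * H)%type -> (H * H)%type)
    (HT : is_J_unitary ip T) :
  ker1 T = ker1 (VT T).
Proof.
case: HH => hip hc _.
case: HT => [[[Tlin [M Tbd]] [g [_ Tg gT]]] [S [Sadj SJT]]].
exact: (ker_eq hip hc Tlin M Tbd gT S Sadj SJT).
Qed.
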